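(* Let $\mathcal{A}=\{e_1,\dots,e_d\}$ be the standard basis of $\mathbb{R}^d$, $\pi_{\mathrm{off}}\in\Delta(\mathcal{A})$, $\mathcal{A}_l\subseteq\mathcal{A}$ nonempty with $\pi_{\mathrm{off}}(a)>0$ for all $a\in\mathcal{A}_l$, and $\alpha\in[0,1)$. Let $0<\pi_{(1)}<\pi_{(2)}<\dots<\pi_{(r)}\le1$ be the distinct values of $\pi_{\mathrm{off}}(a)$, $a\in\mathcal{A}_l$, the value $\pi_{(i)}$ being taken $m_i$ times. Define $\beta_1=1$, $\beta_i=\big(1+\sum_{j=1}^{i-1}m_j(\pi_{(i)}-\pi_{(j)})\big)^{-1}$ for $1<i\le r$, and $\beta_{r+1}=0$. Then there is $i\in[r]$ with $\beta_{i+1}\le\alpha<\beta_i$, and for this $i$, with $\pi^*\in\arg\max_{\pi\in\Delta(\mathcal{A}_l)}\log\det\big(V_{(1-\alpha)\pi+\alpha\pi_{\mathrm{off}}}\big)$ and $\tilde\pi^\star=(1-\alpha)\pi^*+\alpha\pi_{\mathrm{off}}$, $$g_{\mathcal{A}_l}(\tilde\pi^\star)=\frac{\sum_{j=1}^im_j}{\alpha\sum_{j=1}^im_j\pi_{(j)}+1-\alpha}.$$ Further, the support of $\pi^*$ is $S_i=\{a\in\mathcal{A}_l:\pi_{\mathrm{off}}(a)\le\pi_{(i)}\}$ and for $a\in S_i$, $$\pi^*(a)=\frac1{|S_i|}+\frac{\alpha}{1-\alpha}\Big[\frac{\pi_{\mathrm{off}}(S_i)}{|S_i|}-\pi_{\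mathrm{off}}(a)\Big].$$
   Context: $\Delta(\mathcal{B})$ is the probability simplex over $\mathcal{B}$; $V_\pi=\sum_a\pi(a)aa^\top$; $g_{\mathcal{B}}(\pi)=\max_{a\in\mathcal{B}}a^\top V_\pi^{-1}a$; $\pi_{\mathrm{off}}(S)=\sum_{a\in S}\pi_{\mathrm{off}}(a)$. *)

(* Defs.v *)
From HB Require Import structures.
From mathcomp Require Import all_boot all_order all_algebra.
From mathcomp Require Import all_classical all_reals all_analysis.
Set Implicit Arguments. Unset Strict Implicit. Unset Printing Implicit Defensive.
Import Order.TTheory GRing.Theory Num.Theory.
Local Open Scope ring_scope.

Section Defs.
Variable R : realType.
Variable d : nat.

Definition stdb (a : 'I_d) : 'cV[R]_d := delta_mx a 0.

(* pi is a probability distribution over the standard basis supported on B,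
   i.e. pi \in Delta(B) (pi is indexed by the basis index a : 'I_d) *)
Definition inSimplex (B : {set 'I_d}) (pi : 'I_d -> R) : Prop :=
  [/\ forall a, 0 <= pi a, forall a, a \notin B -> pi a = 0
    & \sum_(a < d) pi a = 1].

Definition Vmat (pi : 'I_d -> R) : 'M[R]_d :=
  \sum_(a < d) pi a *: (stdb a *m (stdb a)^T).

(* V_pi as an operator on span(B), written in the orthonormal basis
   (e_b)_{b in B} of span(B):  entries e_b^T V_pi e_b' *)
Definition Vres (B : {set 'I_d}) (pi : 'I_d -> R) : 'M[R]_#|B| :=
  \matrix_(i, j) ((stdb (enum_val i))^T *m Vmat pi *m stdb (enum_val j)) 0 0.

Definition logdet n (M : 'M[R]_n) : \bar R :=
  if 0 < \det M then (ln (\det M))%:E else -oo%E.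

(* g_B(pi) = max_{a in B} a^T V_pi^{-1} a, with V_pi taken on span(B)
   (for a = e_{enum_val i}, its coordinate vector in that basis is delta i) *)
Definition gB (B : {set 'I_d}) (pi : 'I_d -> R) : R :=
  \big[Num.max/0]_(i < #|B|)
     ((delta_mx i 0 : 'cV[R]_#|B|)^T *m invmx (Vres B pi) *m (delta_mx i 0 : 'cV[R]_#|B|)) 0 0.

Definition mix (alpha : R) (poff pi : 'I_d -> R) : 'I_d -> R :=
  fun a => (1 - alpha) * pi a + alpha * poff a.

Definition is_argmax_logdet (B : {set 'I_d}) (alpha : R) (poff pi : 'I_d -> R)
  : Prop :=
  inSimplex B pi /\
  forall pi', inSimplex B pi' ->
    (logdet (Vres B (mix alpha poff pi')) <= logdet (Vres B (mix alpha poff pi)))%E.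

(* the distinct values pi_(1) < ... < pi_(r) of poff on B, 0-indexed *)
Definition dvals (B : {set 'I_d}) (poff : 'I_d -> R) : seq R :=
  sort <=%R (undup [seq poff a | a <- enum B]).

Definition rnum (B : {set 'I_d}) (poff : 'I_d -> R) : nat := size (dvals B poff).

(* pi_(j+1) in the paper's 1-indexed notation *)
Definition piv (B : {set 'I_d}) (poff : 'I_d -> R) (j : nat) : R :=
  nth 0 (dvals B poff) j.

Definition mult (B : {set 'I_d}) (poff : 'I_d -> R) (j : nat) : nat :=
  #|[set a in B | poff a == piv B poff j]|.

(* beta_(i+1) (0-indexed): beta i = (1 + sum_{j<i} m_j (pi_i - pi_j))^-1 for
   i < r (which gives 1 for i = 0), and beta r = 0 *)
Definition beta (B : {set 'I_d}) (poff : 'I_d -> R) (i : nat) : R :=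
  if (i < rnum B poff)%N then
    (1 + \sum_(j < i) (mult B poff j)%:R * (piv B poff i - piv B poff j))^-1
  else 0.

Definition Sset (B : {set 'I_d}) (poff : 'I_d -> R) (i : nat) : {set 'I_d} :=
  [set a in B | poff a <= piv B poff i].

End Defs.

(* Main.v *)
Require Import Defs.
From HB Require Import structures.
From mathcomp Require Import all_boot all_order all_algebra.
From mathcomp Require Import all_classical all_reals all_analysis.
From mathcomp Require Import ring lra.
Import Order.TTheory GRing.Theory Num.Theory.
Local Open Scope ring_scope.
Set Implicit Arguments. Unset Strict Implicit. Unset Printing Implicit Defensive.


Section Mat.
Variable R : realType.
Variable d : nat.

Lemma Vmat_diag (pi : 'I_d -> R) : Vmat pi = diag_mx (\row_a pi a).
Proof.
rewrite /Vmat diag_mx_sum_delta; apply: eq_bigr => a _.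
by rewrite /stdb trmx_delta mul_delta_mx mxE.
Qed.

Lemma Vres_diag (B : {set 'I_d}) (pi : 'I_d -> R) :
  Vres B pi = diag_mx (\row_i pi (enum_val i)).
Proof.
apply/matrixP => i j; rewrite /Vres mxE Vmat_diag /stdb trmx_delta -rowE -colE.
rewrite !mxE.
case: (eqVneq i j) => [->|ij]; first by rewrite !eqxx.
by rewrite (inj_eq enum_val_inj) (negPf ij).
Qed.

Lemma logdet_Vres (B : {set 'I_d}) (pi : 'I_d -> R) :
  logdet (Vres B pi) = if 0 < \prod_(a in B) pi a then (ln (\prod_(a in B) pi a))%:E
     else -oo%E.
Proof.
rewrite /logdet Vres_diag det_diag (big_enum_val (A:=mem B)) /=.
by under eq_bigr do rewrite mxE.
Qed.

Lemma gB_diag (B : {set 'I_d}) (pi : 'I_d -> R) :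
  (forall a, a \in B -> pi a != 0) ->
  gB B pi = \big[Num.max/0]_(i < #|B|) (pi (enum_val i))^-1.
Proof.
move=> hpi; rewrite /gB.
set D := diag_mx (\row_i (pi (enum_val i))^-1 : 'rV[R]_#|B|).
have hV : Vres B pi *m D = 1%:M.
  rewrite Vres_diag /D mulmx_diag; apply/matrixP => i j; rewrite !mxE.
  case: (eqVneq i j) => [->|ij]; last by rewrite ?(negPf ij) ?mulr0n.
  by rewrite mulr1n mulfV // hpi // enum_valP.
have hu : Vres B pi \in unitmx.
  by case: (mulmx1_unit hV).
have hinv : invmx (Vres B pi) = D.
  by rewrite -[RHS]mul1mx -(mulVmx hu) -mulmxA hV mulmx1.
rewrite hinv; apply: eq_bigr => i _.
by rewrite trmx_delta -rowE -colE !mxE eqxx mulr1n.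
Qed.
End Mat.


Section Comb.
Variable R : realType.
Variable d : nat.
Variable B : {set 'I_d}.
Variable poff : 'I_d -> R.

Local Notation r := (rnum B poff).
Local Notation piv := (piv B poff).

Lemma dvals_lt : sorted <%R (dvals B poff).
Proof. by rewrite /dvals sort_lt_sorted undup_uniq. Qed.

Lemma piv_le i j : (i < r)%N -> (j < r)%N -> (piv i <= piv j) = (i <= j)%N.
Proof. move=> ir jr; exact: (lt_sorted_leq_nth 0 dvals_lt). Qed.

Lemma mem_dvals x : (x \in dvals B poff) = (x \in [seq poff a | a <- enum B]).
Proof. by rewrite /dvals mem_sort mem_undup. Qed.

Lemma piv_in i : (i < r)%N -> exists2 a, a \in B & poff a = piv i.
Proof.
move=> ir; rewrite /Defs.piv; have := mem_nth 0 ir; rewrite mem_dvals => /mapP[a].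
by rewrite mem_enum => aB ->; exists a.
Qed.

Lemma idx_of a : a \in B -> exists2 k, (k < r)%N & poff a = piv k.
Proof.
move=> aB; have : poff a \in dvals B poff.
  by rewrite mem_dvals; apply/mapP; exists a; rewrite ?mem_enum.
move=> h; exists (index (poff a) (dvals B poff)); first by rewrite index_mem.
by rewrite /Defs.piv nth_index.
Qed.

Lemma sum_eqk (k n : nat) : \sum_(j < n) ((k == j)%:R : R) = (k < n)%:R.
Proof.
elim: n => [|n IH]; first by rewrite big_ord0.
rewrite big_ord_recr /= IH ltnS.
by have [h|h|h] := ltngtP k n; rewrite ?addr0 ?add0r.
Qed.

Lemma sum_count a i : a \in B -> (i < r)%N ->
  \sum_(j < i.+1) ((poff a == piv j)%:R : R) = (poff a <= piv i)%R%:R.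
Proof.
move=> aB ir; have [k kr ->] := idx_of aB.
rewrite piv_le // -ltnS -sum_eqk; apply: eq_bigr => j _.
have jr : (j < r)%N by apply: leq_trans (ltn_ord j) ir.
by rewrite eq_le !piv_le // -eqn_leq.
Qed.

Lemma sum_S (F : 'I_d -> R) i : (i < r)%N ->
  \sum_(a in Sset B poff i) F a =
  \sum_(j < i.+1) \sum_(a in B | poff a == piv j) F a.
Proof.
move=> ir.
under [RHS]eq_bigr do rewrite big_mkcondr /=.
rewrite exchange_big /=.
rewrite (eq_bigl (fun a => (a \in B) && (poff a <= piv i))); last first.
  by move=> a; rewrite inE.
rewrite big_mkcondr /=; apply: eq_bigr => a aB.
transitivity (\sum_(j < i.+1) ((poff a == piv j)%:R * F a)); last first.
  by apply: eq_bigr => j _; case: (poff a == piv j); rewrite ?mul1r ?mul0r.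
by rewrite -mulr_suml sum_count //; case: (poff a <= piv i); rewrite ?mul1r ?mul0r.
Qed.

Lemma card_S i : (i < r)%N ->
  (#|Sset B poff i|%:R : R) = \sum_(j < i.+1) (mult B poff j)%:R.
Proof.
move=> ir; rewrite -sumr_const (sum_S (fun=> 1)) //; apply: eq_bigr => j _.
rewrite sumr_const /mult; congr (_ *+ _); apply: eq_card => a; by rewrite inE.
Qed.

Lemma sumpoff_S i : (i < r)%N ->
  \sum_(a in Sset B poff i) poff a = \sum_(j < i.+1) (mult B poff j)%:R * piv j.
Proof.
move=> ir; rewrite sum_S //; apply: eq_bigr => j _.
rewrite (eq_bigr (fun=> piv j)); last by move=> a /andP[_ /eqP].
rewrite sumr_const /mult mulr_natl; congr (_ *+ _); apply: eq_card => a; by rewrite inE.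
Qed.

End Comb.

Section Ana.
Variable R : realType.

Lemma ln_le_sub1 (x : R) : 0 < x -> ln x <= x - 1.
Proof.
move=> x0; have := @le_ln1Dx R (x - 1).
have -> : 1 + (x - 1) = x by ring. apply; lra.
Qed.

Lemma ln_eq_sub1 (x : R) : 0 < x -> ln x = x - 1 -> x = 1.
Proof.
move=> x0 hx; apply/eqP; rewrite -(ln_eq0 x0); apply/negPn/negP => hne.
have := expR_gt1Dx hne; rewrite lnK ?posrE // hx.
lra.
Qed.

Lemma ln_prod (I : finType) (P : pred I) (f : I -> R) :
  (forall i, P i -> 0 < f i) ->
  0 < \prod_(i | P i) f i /\ ln (\prod_(i | P i) f i) = \sum_(i | P i) ln (f i).
Proof.
move=> hf.
apply: (big_rec2 (fun x y => 0 < x /\ ln x = y)); first by rewrite ln1.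
move=> i x y Pi [x0 <-]; split; first by rewrite mulr_gt0 // hf.
by rewrite lnM // posrE // hf.
Qed.
End Ana.


Section Part1.
Variable R : realType.
Variable d : nat.
Variable B : {set 'I_d}.
Variable poff : 'I_d -> R.

Lemma r_gt0 : (0 < #|B|)%N -> (0 < rnum B poff)%N.
Proof.
case/card_gt0P => a aB; have [k kr _] := idx_of poff aB.
exact: leq_ltn_trans (leq0n k) kr.
Qed.

Lemma beta_ex (alpha : R) : (0 < #|B|)%N -> 0 <= alpha -> alpha < 1 ->
  exists i : nat, (i < rnum B poff)%N /\
     beta B poff i.+1 <= alpha < beta B poff i.
Proof.
move=> hB a0 a1; have r0 := r_gt0 hB.
pose P i := ((i < rnum B poff)%N && (alpha < beta B poff i)).
have exP : exists i, P i.
  exists 0%N; rewrite /P r0 /beta r0 big_ord0 addr0 invr1 //.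
have ubP : forall i, P i -> (i <= rnum B poff)%N.
  by move=> i /andP[/ltnW].
case: (ex_maxnP exP ubP) => i /andP[ir hi] hmax.
exists i; split => //; rewrite hi andbT.
case: (ltnP i.+1 (rnum B poff)) => h.
  rewrite leNgt; apply/negP => hlt.
  by have := hmax i.+1; rewrite /P h hlt ltnn => /(_ isT).
by rewrite /beta ltnNge h.
Qed.
End Part1.


Section Main.
Variable R : realType.
Variable d : nat.
Variable B : {set 'I_d}.
Variable poff : 'I_d -> R.

Lemma sum_simplex (pi : 'I_d -> R) : inSimplex B pi -> \sum_(a in B) pi a = 1.
Proof.
case=> _ h0 h1; rewrite big_mkcond /= -h1; apply: eq_bigr => a _.
by case: ifP => // /negbT /h0 ->.
Qed.

Lemma beta_form i k : (k < rnum B poff)%N -> (i <= k)%N -> (k <= i.+1)%N ->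
  beta B poff k =
  (1 + (piv B poff k * #|Sset B poff i|%:R - \sum_(a in Sset B poff i) poff a))^-1
  /\ 1 <= 1 + (piv B poff k * #|Sset B poff i|%:R - \sum_(a in Sset B poff i) poff a).
Proof.
move=> kr ik ki.
have ir : (i < rnum B poff)%N by apply: leq_ltn_trans ik kr.
have E : \sum_(j < k) (mult B poff j)%:R * (piv B poff k - piv B poff j) =
   piv B poff k * #|Sset B poff i|%:R - \sum_(a in Sset B poff i) poff a.
  rewrite card_S // sumpoff_S // mulr_sumr -sumrB.
  move: ik; rewrite leq_eqVlt => /orP[/eqP <-|].
    rewrite [in RHS]big_ord_recr /= mulrC subrr addr0; apply: eq_bigr => j _; ring.
  move=> ik'; have -> : k = i.+1 by apply/eqP; rewrite eqn_leq ki ik'.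
  by apply: eq_bigr => j _; ring.
rewrite /beta kr E; split => //.
rewrite -E lerDl; apply: sumr_ge0 => j _; apply: mulr_ge0 => //.
rewrite subr_ge0 piv_le //; first exact: ltnW.
exact: ltn_trans (ltn_ord j) kr.
Qed.

End Main.


Section Main2.
Variable R : realType.
Variable d : nat.
Variable B : {set 'I_d}.
Variable poff : 'I_d -> R.

Lemma main_part (alpha : R) (i : nat) (pistar : 'I_d -> R) :
  (forall a, 0 <= poff a) -> 0 <= alpha -> alpha < 1 ->
  (i < rnum B poff)%N ->
  beta B poff i.+1 <= alpha < beta B poff i ->
  is_argmax_logdet B alpha poff pistar ->
  [/\ gB B (mix alpha poff pistar) =
             (\sum_(j < i.+1) (mult B poff j)%:R) /
             (alpha * (\sum_(j < i.+1) (mult B poff j)%:R * piv B poff j)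
                + 1 - alpha),
           [set a | pistar a != 0] = Sset B poff i &
           forall a, a \in Sset B poff i ->
             pistar a = #|Sset B poff i|%:R^-1 +
               alpha / (1 - alpha) *
                 ((\sum_(b in Sset B poff i) poff b) / #|Sset B poff i|%:R
                  - poff a)].
Proof.
move=> poff0 a0 a1 ir /andP[hb1 hb2] [hsimp hmax].
have hMsum := card_S ir; have hPsum := sumpoff_S ir.
have [bi Di] := beta_form ir (leqnn i) (leqnSn i).
set S := Sset B poff i in hMsum hPsum bi Di *.
set M := #|S|%:R in hMsum bi Di *.
set P := \sum_(b in S) poff b in hPsum bi Di *.
have SB : forall a, a \in S -> a \in B by move=> a; rewrite inE => /andP[].
have [a00 a00B a00e] := piv_in ir.
have a00S : a00 \in S by rewrite inE a00B a00e lexx.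
have M0 : 0 < M by rewrite ltr0n; apply/card_gt0P; exists a00.
have P0 : 0 <= P by apply: sumr_ge0.
pose c := (1 - alpha + alpha * P) / M.
have c0 : 0 < c by apply: divr_gt0 => //; nra.
have hc1 : forall a, a \in S -> alpha * poff a < c.
  move=> a; rewrite inE => /andP[aB ha].
  move: hb2; rewrite bi -div1r ltr_pdivlMr; last by lra.
  move=> h; apply: (le_lt_trans (y := alpha * piv B poff i)).
    exact: ler_wpM2l.
  rewrite /c ltr_pdivlMr //; nra.
have hc2 : forall a, a \in B -> a \notin S -> c <= alpha * poff a.
  move=> a aB; rewrite inE aB /= -ltNge => ha.
  have [k kr ke] := idx_of poff aB.
  have ik : (i < k)%N by rewrite ltnNge -(piv_le kr ir) -ke -ltNge.
  have i1r : (i.+1 < rnum B poff)%N by exact: leq_ltn_trans ik kr.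
  have [bj Dj] := beta_form i1r (leqnSn i) (leqnn _).
  rewrite -/S -/M -/P in bj Dj.
  move: hb1; rewrite bj -div1r ler_pdivrMr; last by lra.
  move=> h; apply: (le_trans (y := alpha * piv B poff i.+1)); last first.
    by apply: ler_wpM2l => //; rewrite ke piv_le.
  by rewrite /c ler_pdivrMr //; nra.
pose pi0 a := if a \in S then (c - alpha * poff a) / (1 - alpha) else 0.
have a1' : 0 < 1 - alpha by lra.
have hsimp0 : inSimplex B pi0.
  split.
  - move=> a; rewrite /pi0; case: ifP => // /hc1 h.
    by apply: divr_ge0; lra.
  - by move=> a aB; rewrite /pi0; case: ifP => // /SB; rewrite (negPf aB).
  - rewrite (bigID (fun a => a \in S)) /= [X in _ + X]big1; last first.
      by move=> a /negPf; rewrite /pi0 => ->.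
    rewrite addr0 (eq_bigr (fun a => (c - alpha * poff a) / (1 - alpha))); last first.
      by move=> a aS; rewrite /pi0 aS.
    rewrite -mulr_suml sumrB sumr_const -mulr_sumr -/P -/M /c.
    rewrite -[_ *+ #|S|]mulr_natr -/M divfK ?gt_eqF //.
    by rewrite addrK divff ?gt_eqF.
set m0 := mix alpha poff pi0.
set m1 := mix alpha poff pistar.
have m0S : forall a, a \in S -> m0 a = c.
  move=> a aS; rewrite /m0 /mix /pi0 aS; field; lra.
have m0nS : forall a, a \notin S -> m0 a = alpha * poff a.
  by move=> a /negPf aS; rewrite /m0 /mix /pi0 aS mulr0 add0r.
have m0c : forall a, a \in B -> c <= m0 a.
  move=> a aB; case: (boolP (a \in S)) => aS; first by rewrite m0S.
  by rewrite m0nS // hc2.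
have m0pos : forall a, a \in B -> 0 < m0 a.
  by move=> a /m0c; apply: lt_le_trans.
have m1ge0 : forall a, 0 <= m1 a.
  move=> a; case: hsimp => h _ _; rewrite /m1 /mix.
  by apply: addr_ge0; apply: mulr_ge0 => //; lra.
have m10 : forall a, m1 a = m0 a + (1 - alpha) * (pistar a - pi0 a).
  by move=> a; rewrite /m1 /m0 /mix; ring.
have [P0pos lnP0] := ln_prod m0pos.
have hm := hmax pi0 hsimp0; rewrite -/m0 -/m1 !logdet_Vres P0pos in hm.
move: hm; case: ifP => [P1pos|]; last by rewrite leeNy_eq.
rewrite lee_fin => hln.
have m1pos : forall a, a \in B -> 0 < m1 a.
  move=> a aB; rewrite lt_neqAle m1ge0 andbT; apply/negP => /eqP h.
  by move: P1pos; rewrite (bigD1 a) //= -h mul0r ltxx.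
have [_ lnP1] := ln_prod m1pos.
pose x a := m1 a / m0 a.
have xpos : forall a, a \in B -> 0 < x a.
  by move=> a aB; apply: divr_gt0; [exact: m1pos | exact: m0pos].
have hsumln : 0 <= \sum_(a in B) ln (x a).
  rewrite (eq_bigr (fun a => ln (m1 a) - ln (m0 a))); last first.
    by move=> a aB; rewrite /x ln_div // posrE; [exact: m1pos | exact: m0pos].
  by rewrite sumrB -lnP0 -lnP1 subr_ge0.
have hsumx : \sum_(a in B) (x a - 1) <= 0.
  apply: (le_trans (y := \sum_(a in B) ((1 - alpha) / c * (pistar a - pi0 a)))).
    apply: ler_sum => a aB.
    have -> : x a - 1 = (1 - alpha) * (pistar a - pi0 a) / m0 a.
      rewrite /x m10; field; exact: lt0r_neq0 (m0pos a aB).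
    case: (boolP (a \in S)) => aS.
      by rewrite m0S // mulrAC.
    have -> : pi0 a = 0 by rewrite /pi0 (negPf aS).
    rewrite subr0 mulrAC; apply: ler_wpM2r.
      by case: hsimp => h _ _; exact: h.
    apply: ler_wpM2l; first lra.
    by rewrite lef_pV2 ?posrE //; [exact: m0c | exact: m0pos].
  by rewrite -mulr_sumr sumrB !sum_simplex // subrr mulr0.
have hge : forall b, b \in B -> 0 <= x b - 1 - ln (x b).
  by move=> b bB; rewrite subr_ge0 ln_le_sub1 // xpos.
have hz : \sum_(a in B) (x a - 1 - ln (x a)) = 0.
  apply/eqP; rewrite eq_le; apply/andP; split; last exact: sumr_ge0.
  by rewrite sumrB; lra.
have hx1 : forall a, a \in B -> x a = 1.
  move=> a aB; have h := psumr_eq0P hge hz aB.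
  by apply: ln_eq_sub1; [exact: xpos | lra].
have hm10 : forall a, a \in B -> m1 a = m0 a.
  by move=> a aB; apply: divr1_eq; exact: hx1.
have hpi : forall a, pistar a = pi0 a.
  move=> a; case: (boolP (a \in B)) => aB.
    have := hm10 a aB; rewrite m10 -[RHS]addr0 => /addrI /eqP.
    rewrite mulf_eq0 subr_eq0 => /orP[/eqP|/eqP //]; lra.
  case: hsimp0 => _ h0 _; case: hsimp => _ h1 _.
  by rewrite h0 // h1.
split.
- rewrite gB_diag; last by move=> a aB; rewrite gt_eqF // m1pos.
  have -> : \big[Num.max/0]_(j < #|B|) (m1 (enum_val j))^-1 = c^-1.
    apply/le_anti/andP; split.
      apply: (big_ind (fun y => y <= c^-1)).
      + by rewrite invr_ge0 ltW.
      + by move=> y w hy hw; rewrite ge_max hy hw.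
      + move=> j _; have aB := enum_valP j.
        rewrite hm10 // lef_pV2 ?posrE ?m0c //; exact: m0pos.
    rewrite (bigD1 (enum_rank_in a00B a00)) //= enum_rankK_in //.
    by rewrite le_max hm10 // m0S // lexx.
  rewrite -hMsum -hPsum /c invf_div.
  by have -> : alpha * P + 1 - alpha = 1 - alpha + alpha * P by ring.
- apply/setP => a; rewrite inE hpi /pi0; case: ifP => aS.
    by rewrite gt_eqF //; apply: divr_gt0 => //; rewrite subr_gt0 hc1.
  by rewrite eqxx.
- move=> a aS; rewrite hpi /pi0 aS /c.
  field; apply/andP; split; [exact: lt0r_neq0 | rewrite subr_eq0; apply/eqP; lra].
Qed.
End Main2.

Unset Implicit Arguments.

(* Indices i below are 0-indexed: i here corresponds to i+1 in the paper. *)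
Theorem proposition4p7 (R : realType) (d : nat) (poff : 'I_d -> R)
  (Al : {set 'I_d}) (alpha : R) :
  inSimplex [set: 'I_d]%SET poff ->
  (0 < #|Al|)%N ->
  (forall a, a \in Al -> 0 < poff a) ->
  0 <= alpha -> alpha < 1 ->
  (exists i : nat, (i < rnum Al poff)%N /\
     beta Al poff i.+1 <= alpha < beta Al poff i) /\
  (forall i : nat, (i < rnum Al poff)%N ->
     beta Al poff i.+1 <= alpha < beta Al poff i ->
     forall pistar : 'I_d -> R, is_argmax_logdet Al alpha poff pistar ->
       [/\ gB Al (mix alpha poff pistar) =
             (\sum_(j < i.+1) (mult Al poff j)%:R) /
             (alpha * (\sum_(j < i.+1) (mult Al poff j)%:R * piv Al poff j)
                + 1 - alpha),
           [set a | pistar a != 0] = Sset Al poff i &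
           forall a, a \in Sset Al poff i ->
             pistar a = #|Sset Al poff i|%:R^-1 +
               alpha / (1 - alpha) *
                 ((\sum_(b in Sset Al poff i) poff b) / #|Sset Al poff i|%:R
                  - poff a)]).
Proof.
move=> hoff hB hpos a0 a1; split; first exact: beta_ex.
move=> i ir hb pistar harg; apply: main_part => //.
by case: hoff.
Qed.
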